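(* Let $M>0$, $\beta^*>0$, and let $g$ be the log-normal density $g(t)=\frac{1}{t\sigma\sqrt{2\pi}}\exp\!\big(-\frac{(\ln t-\mu)^2}{2\sigma^2}\big)$ for $t>0$, $g(t)=0$ for $t\le0$ ($\mu\in\mathbb{R}$, $\sigma>0$). Let $I$ be the unique $C^1$ solution on $[0,\infty)$ of \[ I'(t)=\beta^*(M-I(t))\Big(I(t)-\int_0^t g(t-s)I(s)\,ds\Big),\qquad I(0)=I_0\in[0,M]. \] Then the limit $I_\infty:=\lim_{t\to\infty}I(t)$ exists in $\mathbb{R}$. *)

(* Defs.v *)
From Stdlib Require Import Reals Lra.
From Coquelicot Require Import Coquelicot.
Open Scope R_scope.

Definition lognormal (mu sigma : R) (t : R) : R :=
  if Rlt_dec 0 t then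
    / (t * sigma * sqrt (2 * PI)) * exp (- (ln t - mu) ^ 2 / (2 * sigma ^ 2))
  else 0.

Definition C1_on_nonneg (f f' : R -> R) : Prop :=
  (forall t, 0 < t -> is_derive f t (f' t)) /\
  filterlim (fun h => (f h - f 0) / h) (at_right 0) (locally (f' 0)) /\
  (forall t, 0 < t -> continuous f' t) /\
  filterlim f' (at_right 0) (locally (f' 0)).

Definition is_solution (beta M I0 : R) (g : R -> R) (I : R -> R) : Prop :=
  exists I' : R -> R,
    C1_on_nonneg I I' /\
    I 0 = I0 /\
    forall t, 0 <= t ->
      I' t = beta * (M - I t) * (I t - RInt (fun s => g (t - s) * I s) 0 t).

(* Main.v *)
Require Import Defs.
From Stdlib Require Import Reals Lra Classical.
From Coquelicot Require Import Coquelicot.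
Open Scope R_scope.

Definition gf (x : R) := exp (- (x * x)).

Lemma gf_cont x : continuous gf x.
Proof. apply (@ex_derive_continuous R_AbsRing R_NormedModule). unfold gf. auto_derive. auto. Qed.

Lemma gf_pos x : 0 < gf x.
Proof. apply exp_pos. Qed.

Lemma gf_ex a b : ex_RInt gf a b.
Proof. apply (@ex_RInt_continuous R_CompleteNormedModule). intros; apply gf_cont. Qed.

Definition FG x := RInt gf 0 x.

Lemma FG_deriv (x : R) : is_derive FG x (gf x).
Proof.
  apply is_derive_RInt with 0.
  - apply filter_forall. intros b. apply RInt_correct. apply gf_ex.
  - apply gf_cont.
Qed.

Definition phi (x t : R) := exp (- (x * x) * (1 + t * t)) / (1 + t * t).

Lemma pos1 t : 0 < 1 + t * t.
Proof. nra. Qed.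

Lemma phi_der u v : Derive (fun z => phi z v) u = -2 * u * exp (- (u * u) * (1 + v * v)).
Proof.
  apply is_derive_unique. unfold phi. auto_derive.
  - pose proof (pos1 v); lra.
  - pose proof (pos1 v); field; lra.
Qed.

Lemma phi_cont u v : continuous (fun t => phi u t) v.
Proof. apply (@ex_derive_continuous R_AbsRing R_NormedModule). unfold phi. auto_derive. pose proof (pos1 v); lra. Qed.

Lemma phi_ex u a b : ex_RInt (fun t => phi u t) a b.
Proof. apply (@ex_RInt_continuous R_CompleteNormedModule). intros; apply phi_cont. Qed.

Definition HG x := RInt (fun t => phi x t) 0 1.

Lemma HG_deriv (x : R) : is_derive HG x (-2 * gf x * FG x).
Proof.
  unfold HG.
  assert (H : is_derive (fun x0 => RInt (fun t => phi x0 t) 0 1) x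
    (RInt (fun t => Derive (fun u => phi u t) x) 0 1)).
  { apply is_derive_RInt_param.
    - apply filter_forall. intros x0 t _. unfold phi. auto_derive.
      pose proof (pos1 t); lra.
    - intros t _.
      apply continuity_2d_pt_ext with (fun u v => -2 * u * exp (- (u * u) * (1 + v * v))).
      { intros; rewrite phi_der; reflexivity. }
      apply continuity_2d_pt_mult.
      + apply continuity_2d_pt_mult. apply continuity_2d_pt_const. apply continuity_2d_pt_id1.
      + apply continuity_1d_2d_pt_comp with (f := exp) (g := fun u v => - (u * u) * (1 + v * v)).
        * apply continuity_pt_filterlim. apply (@ex_derive_continuous R_AbsRing R_NormedModule). auto_derive. auto.
        * apply continuity_2d_pt_mult.
          -- apply continuity_2d_pt_opp. apply continuity_2d_pt_mult; apply continuity_2d_pt_id1.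
          -- apply continuity_2d_pt_plus. apply continuity_2d_pt_const.
             apply continuity_2d_pt_mult; apply continuity_2d_pt_id2.
    - apply filter_forall. intros; apply phi_ex. }
  replace (-2 * gf x * FG x) with (RInt (fun t => Derive (fun u => phi u t) x) 0 1); auto.
  rewrite (RInt_ext _ (fun t => scal (-2 * gf x) (scal x (gf (x * t + 0))))).
  2:{ intros t _. rewrite phi_der. unfold gf, scal; simpl; unfold mult; simpl.
      replace (- (x * t + 0) * (x * t + 0)) with (-(x*x) * (t * t)) by ring.
      replace (- ((x * t + 0) * (x * t + 0))) with (-(x*x) * (t * t)) by ring.
      replace (- (x * x) * (1 + t * t)) with (- (x * x) + (- (x*x) * (t*t))) by ring.
      rewrite exp_plus. ring. }
apply is_RInt_unique.
  replace (-2 * gf x * FG x) with (scal (-2 * gf x) (FG x)) by reflexivity.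
  apply (@is_RInt_scal R_NormedModule).
  apply (@is_RInt_comp_lin R_NormedModule).
  replace (x * 0 + 0) with 0 by ring. replace (x * 1 + 0) with x by ring.
  apply (@RInt_correct R_CompleteNormedModule). apply gf_ex.
Qed.

Lemma HG0 : HG 0 = PI / 4.
Proof.
  unfold HG. rewrite (RInt_ext _ (fun t => / (1 + t ^ 2))).
  2:{ intros t _. unfold phi. replace (- (0 * 0) * (1 + t * t)) with 0 by ring.
      rewrite exp_0. simpl. field. pose proof (pos1 t). lra. }
  rewrite <- atan_1.
  replace (atan 1) with (atan 1 - atan 0) by (rewrite atan_0; ring).
  apply is_RInt_unique.
  apply (is_RInt_derive atan (fun t => / (1 + t ^ 2))).
  - intros t _. apply is_derive_Reals. apply derivable_pt_lim_atan.
  - intros t _. apply (@ex_derive_continuous R_AbsRing R_NormedModule). auto_derive. pose proof (pos1 t). nra.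
Qed.

Lemma HG_ge0 x : 0 <= HG x.
Proof.
  unfold HG. apply RInt_ge_0. lra. apply phi_ex.
  intros t _. unfold phi. apply Rlt_le. apply Rdiv_lt_0_compat. apply exp_pos. apply pos1.
Qed.

Lemma FG_sq x : FG x * FG x + HG x = PI / 4.
Proof.
  set (h := fun x => FG x * FG x + HG x).
  assert (Hd : forall y, is_derive h y 0).
  { intros y. unfold h.
    assert (A : is_derive (fun y => FG y * FG y) y (gf y * FG y + FG y * gf y)).
    { apply (is_derive_mult FG FG); [apply FG_deriv|apply FG_deriv|intros; apply Rmult_comm]. }
    pose proof (HG_deriv y) as B.
    pose proof (@is_derive_plus R_AbsRing R_NormedModule _ _ y _ _ A B) as C.
    replace 0 with (plus (gf y * FG y + FG y * gf y) (-2 * gf y * FG y)).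
    2:{ unfold plus; simpl. ring. }
    exact C. }
  destruct (MVT_gen h 0 x (fun _ => 0)) as [c [_ Hc]].
  - intros; apply Hd.
  - intros; apply continuity_pt_filterlim. apply (@ex_derive_continuous R_AbsRing R_NormedModule). eexists; apply Hd.
  - change (h x = PI / 4). rewrite <- HG0.
    replace (HG 0) with (h 0). lra.
    unfold h, FG. rewrite RInt_point. unfold zero; simpl. ring.
Qed.

Lemma FG_bound x : Rabs (FG x) <= sqrt PI / 2.
Proof.
  pose proof (FG_sq x). pose proof (HG_ge0 x).
  rewrite <- sqrt_Rsqr_abs.
  replace (sqrt PI / 2) with (sqrt (PI / 4)).
  - apply sqrt_le_1_alt. unfold Rsqr. lra.
  - replace (PI / 4) with (PI * / 4) by field. rewrite sqrt_mult.
    + replace 4 with (2 * 2) by ring. rewrite sqrt_inv, sqrt_square; try lra. 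
    + pose proof PI_RGT_0; lra.
    + lra.
Qed.

Lemma FG_strict x : FG x < sqrt PI / 2.
Proof.
  assert (FG x < FG (x + 1)).
  { unfold FG. rewrite <- (RInt_Chasles gf 0 x (x+1)); try apply gf_ex.
    unfold plus; simpl.
    assert (0 < RInt gf x (x + 1)).
    { apply RInt_gt_0. lra. intros; apply gf_pos. intros; apply gf_cont. }
    lra. }
  pose proof (FG_bound (x+1)). pose proof (Rle_abs (FG (x+1))). lra.
Qed.

Lemma ballR (x e y : R) : ball x e y <-> Rabs (y - x) < e.
Proof. reflexivity. Qed.

Lemma locally_R (x : R) (P : R -> Prop) (d : R) : 0 < d ->
  (forall y, Rabs (y - x) < d -> P y) -> locally x P.
Proof. intros Hd H. exists (mkposreal d Hd). intros y Hy. apply H. exact Hy. Qed.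

Lemma locally_gt (x a : R) : a < x -> locally x (fun y => a < y).
Proof.
  intros H. apply locally_R with (x - a). lra.
  intros y Hy. apply Rabs_lt_between' in Hy. lra.
Qed.

Lemma locally_lt (x a : R) : x < a -> locally x (fun y => y < a).
Proof.
  intros H. apply locally_R with (a - x). lra.
  intros y Hy. apply Rabs_lt_between' in Hy. lra.
Qed.

Definition lnf (mu sigma s : R) :=
  / (s * sigma * sqrt (2 * PI)) * exp (- (ln s - mu) ^ 2 / (2 * sigma ^ 2)).

Lemma sqrt2PI_pos : 0 < sqrt (2 * PI).
Proof. apply sqrt_lt_R0. pose proof PI_RGT_0; lra. Qed.

Lemma logn_pos_eq mu sigma s : 0 < s -> lognormal mu sigma s = lnf mu sigma s.
Proof. intros H. unfold lognormal. destruct (Rlt_dec 0 s); [reflexivity|lra]. Qed.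

Lemma logn_neg_eq mu sigma s : s <= 0 -> lognormal mu sigma s = 0.
Proof. intros H. unfold lognormal. destruct (Rlt_dec 0 s); [lra|reflexivity]. Qed.

Lemma logn_ge0 mu sigma s : 0 < sigma -> 0 <= lognormal mu sigma s.
Proof.
  intros Hs. unfold lognormal. destruct (Rlt_dec 0 s); [|lra].
  apply Rlt_le, Rmult_lt_0_compat; [|apply exp_pos].
  apply Rinv_0_lt_compat. pose proof sqrt2PI_pos. 
  apply Rmult_lt_0_compat; [apply Rmult_lt_0_compat|]; lra.
Qed.

Definition Kc (mu sigma : R) := exp (2 * sigma ^ 2 - 2 * mu) / (sigma * sqrt (2 * PI)).

Lemma Kc_pos mu sigma : 0 < sigma -> 0 < Kc mu sigma.
Proof.
  intros Hs. unfold Kc. apply Rdiv_lt_0_compat. apply exp_pos.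
  pose proof sqrt2PI_pos. nra.
Qed.

Lemma logn_le mu sigma s : 0 < sigma -> 0 < s -> lognormal mu sigma s <= Kc mu sigma * s.
Proof.
  intros Hs Hpos. rewrite logn_pos_eq by auto. unfold lnf, Kc.
  pose proof sqrt2PI_pos.
  set (a := ln s - mu).
  assert (Ha : - a ^ 2 / (2 * sigma ^ 2) <= 2 * a + 2 * sigma ^ 2).
  { apply Rmult_le_reg_r with (2 * sigma ^ 2). nra.
    unfold Rdiv. rewrite Rmult_assoc, Rinv_l by nra.
    assert (0 <= (a + 2*sigma^2)^2) by apply pow2_ge_0. nra. }
  assert (Ha' : exp (- a ^ 2 / (2 * sigma ^ 2)) <= exp (2 * a + 2 * sigma ^ 2)).
  { destruct Ha as [Ha|Ha]; [left; apply exp_increasing; auto| right; rewrite Ha; auto]. }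
  clear Ha. rename Ha' into Ha.
  assert (E : exp (2 * a + 2 * sigma ^ 2) = s * s * exp (2 * sigma ^ 2 - 2 * mu)).
  { replace (2 * a + 2 * sigma ^ 2) with (ln s + ln s + (2 * sigma ^ 2 - 2 * mu)) by (unfold a; ring).
    rewrite !exp_plus, exp_ln by auto. ring. }
  rewrite E in Ha.
  assert (P : 0 < s * sigma * sqrt (2 * PI)) by (apply Rmult_lt_0_compat; nra).
  apply Rle_trans with (/ (s * sigma * sqrt (2 * PI)) * (s * s * exp (2 * sigma ^ 2 - 2 * mu))).
  - apply Rmult_le_compat_l; [apply Rlt_le, Rinv_0_lt_compat; auto| exact Ha].
  - right. field. split; nra.
Qed.

Lemma lnf_cont mu sigma s : 0 < sigma -> 0 < s -> continuous (lnf mu sigma) s.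
Proof.
  intros Hs Hpos. pose proof sqrt2PI_pos.
  apply (@ex_derive_continuous R_AbsRing R_NormedModule). unfold lnf.
  auto_derive. repeat split; try lra; try (apply Rgt_not_eq; nra).
  apply Rgt_not_eq. apply Rmult_lt_0_compat; [|lra]. apply Rmult_lt_0_compat; lra.
Qed.

Lemma logn_cont mu sigma s : 0 < sigma -> continuity_pt (lognormal mu sigma) s.
Proof.
  intros Hs.
  destruct (Rlt_le_dec 0 s) as [Hp|Hn].
  - apply continuity_pt_filterlim.
    apply continuous_ext_loc with (lnf mu sigma).
    + apply filter_imp with (fun y => 0 < y). intros y Hy. symmetry. apply logn_pos_eq; auto.
      apply locally_gt; auto.
    + apply lnf_cont; auto.
  - destruct Hn as [Hn|Hn].
    + apply continuity_pt_filterlim.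
      apply continuous_ext_loc with (fun _ => 0).
      * apply filter_imp with (fun y => y < 0). intros y Hy. symmetry. apply logn_neg_eq; lra.
        apply locally_lt; auto.
      * apply continuous_const.
    + subst s. apply continuity_pt_locally. intros eps.
      pose proof (Kc_pos mu sigma Hs) as HK.
      apply locally_R with (eps / Kc mu sigma). apply Rdiv_lt_0_compat; [apply cond_pos|auto].
      intros y Hy. rewrite (logn_neg_eq mu sigma 0) by lra. rewrite Rminus_0_r in *.
      destruct (Rlt_le_dec 0 y) as [Hy0|Hy0].
      * pose proof (logn_le mu sigma y Hs Hy0). pose proof (logn_ge0 mu sigma y Hs).
        rewrite Rabs_right by lra. rewrite Rabs_right in Hy by lra.
        apply Rle_lt_trans with (Kc mu sigma * y); auto.
        apply Rmult_lt_reg_r with (/ Kc mu sigma). apply Rinv_0_lt_compat; auto.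
        rewrite Rmult_comm, <- Rmult_assoc, Rinv_l by lra. unfold Rdiv in Hy. lra.
      * rewrite logn_neg_eq by auto. rewrite Rabs_R0. apply cond_pos.
Qed.

Lemma logn_continuous mu sigma s : 0 < sigma -> continuous (lognormal mu sigma) s.
Proof. intros; apply continuity_pt_filterlim, logn_cont; auto. Qed.

Lemma logn_ex mu sigma a b : 0 < sigma -> ex_RInt (lognormal mu sigma) a b.
Proof. intros. apply (@ex_RInt_continuous R_CompleteNormedModule). intros; apply logn_continuous; auto. Qed.

Definition Phi (mu sigma s : R) := / sqrt PI * FG ((ln s - mu) / (sigma * sqrt 2)).

Lemma Phi_deriv mu sigma s : 0 < sigma -> 0 < s -> is_derive (Phi mu sigma) s (lognormal mu sigma s).
Proof.
  intros Hs Hpos. rewrite logn_pos_eq by auto.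
  assert (Hs2 : 0 < sqrt 2) by (apply sqrt_lt_R0; lra).
  assert (HP : 0 < sqrt PI) by (apply sqrt_lt_R0; apply PI_RGT_0).
  unfold Phi.
  assert (D1 : is_derive (fun s => (ln s - mu) / (sigma * sqrt 2)) s (/ s / (sigma * sqrt 2))).
  { auto_derive. lra. field. nra. }
  pose proof (is_derive_comp FG (fun s => (ln s - mu) / (sigma * sqrt 2)) s _ _ (FG_deriv _) D1) as D2.
  pose proof (is_derive_scal _ _ (/ sqrt PI) _ D2) as D3.
  replace (lnf mu sigma s) with (/ sqrt PI * scal (/ s / (sigma * sqrt 2)) (gf ((ln s - mu) / (sigma * sqrt 2)))).
  exact D3.
  unfold lnf, gf.
  replace (- ((ln s - mu) / (sigma * sqrt 2) * ((ln s - mu) / (sigma * sqrt 2))))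
    with (- (ln s - mu) ^ 2 / (2 * sigma ^ 2)).
  2:{ replace (2 * sigma ^ 2) with (sigma * sigma * (sqrt 2 * sqrt 2)) by (rewrite sqrt_sqrt by lra; ring).
      field. lra. }
  change (scal ?x ?y) with (x * y).
  rewrite sqrt_mult by (pose proof PI_RGT_0; lra).
  field. repeat split; lra.
Qed.

Lemma GL_ge0 mu sigma t : 0 < sigma -> 0 <= t -> 0 <= RInt (lognormal mu sigma) 0 t.
Proof.
  intros. apply RInt_ge_0; auto. apply logn_ex; auto. intros; apply logn_ge0; auto.
Qed.

Lemma GL_lt1 mu sigma t : 0 < sigma -> 0 <= t -> RInt (lognormal mu sigma) 0 t < 1.
Proof.
  intros Hs Ht.
  destruct Ht as [Ht|Ht]; [|subst t; rewrite RInt_point; unfold zero; simpl; lra].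
  set (c := sigma * sqrt 2).
  set (b := (ln t - mu) / c).
  assert (HP : 0 < sqrt PI) by (apply sqrt_lt_R0; apply PI_RGT_0).
  set (eta := / 2 - FG b / sqrt PI).
  assert (Heta : 0 < eta).
  { unfold eta. pose proof (FG_strict b).
    apply Rmult_lt_reg_r with (sqrt PI); auto. unfold Rdiv.
    rewrite Rmult_minus_distr_r, Rmult_assoc, Rinv_l by lra. lra. }
  pose proof (Kc_pos mu sigma Hs) as HK.
  set (e := Rmin t (Rmin 1 (eta / Kc mu sigma))).
  assert (He : 0 < e).
  { unfold e. apply Rmin_pos; auto. apply Rmin_pos. lra. apply Rdiv_lt_0_compat; auto. }
  assert (Het : e <= t) by apply Rmin_l.
  assert (He1 : e <= 1) by (unfold e; eapply Rle_trans; [apply Rmin_r| apply Rmin_l]).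
  assert (HeK : e * Kc mu sigma <= eta).
  { unfold e. apply Rle_trans with (eta / Kc mu sigma * Kc mu sigma).
    apply Rmult_le_compat_r. lra. eapply Rle_trans; [apply Rmin_r| apply Rmin_r].
    right. field. lra. }
  rewrite <- (RInt_Chasles _ 0 e t) by (apply logn_ex; auto).
  change (plus ?x ?y) with (x + y).
  assert (H1 : RInt (lognormal mu sigma) 0 e <= Kc mu sigma * e * e / 2).
  { apply Rle_trans with (RInt (fun s => Kc mu sigma * s) 0 e).
    - apply RInt_le. lra. apply logn_ex; auto.
      apply (@ex_RInt_continuous R_CompleteNormedModule). intros. apply (@ex_derive_continuous R_AbsRing R_NormedModule). auto_derive. auto.
      intros x Hx. apply logn_le; auto; lra.
    - right. replace (Kc mu sigma * e * e / 2) with (Kc mu sigma * e * e / 2 - Kc mu sigma * 0 * 0 / 2) by field.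
      apply is_RInt_unique.
      apply (is_RInt_derive (fun s => Kc mu sigma * s * s / 2) (fun s => Kc mu sigma * s)).
      + intros. auto_derive. auto. field.
      + intros. apply (@ex_derive_continuous R_AbsRing R_NormedModule). auto_derive. auto. }
  assert (H2 : RInt (lognormal mu sigma) e t = Phi mu sigma t - Phi mu sigma e).
  { apply is_RInt_unique. apply (is_RInt_derive (Phi mu sigma) (lognormal mu sigma)).
    - intros x Hx. rewrite Rmin_left in Hx by lra. apply Phi_deriv; auto. lra.
    - intros. apply logn_continuous; auto. }
  assert (H3 : Phi mu sigma t - Phi mu sigma e <= 1 - eta).
  { unfold Phi. fold c. fold b.
    pose proof (FG_bound ((ln e - mu) / c)) as HB.
    apply Rabs_le_between in HB.
    unfold eta.
    apply Rle_trans with (/ sqrt PI * FG b + / sqrt PI * (sqrt PI / 2)).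
    - assert (0 < / sqrt PI) by (apply Rinv_0_lt_compat; auto). nra.
    - right. field. lra. }
  assert (Kc mu sigma * e * e / 2 <= eta / 2).
  { replace (Kc mu sigma * e * e / 2) with ((e * Kc mu sigma) * e / 2) by field. nra. }
  lra.
Qed.


Lemma conv_G mu sigma t : 0 < sigma ->
  RInt (fun s => lognormal mu sigma (t - s)) 0 t = RInt (lognormal mu sigma) 0 t.
Proof.
  intros Hs.
  pose proof (@RInt_comp_lin R_CompleteNormedModule (lognormal mu sigma) (-1) t 0 t) as E.
  assert (E1 : -1 * 0 + t = t) by ring.
  assert (E2 : -1 * t + t = 0) by ring.
  rewrite E1, E2 in E.
  specialize (E (logn_ex _ _ _ _ Hs)).
  pose proof (@opp_RInt_swap R_CompleteNormedModule (lognormal mu sigma) 0 t (logn_ex _ _ _ _ Hs)) as Sw.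
  change (opp ?a) with (- a) in Sw.
  assert (EX : ex_RInt (fun s => lognormal mu sigma (t - s)) 0 t).
  { apply (@ex_RInt_continuous R_CompleteNormedModule). intros z _.
      apply continuity_pt_filterlim.
      apply continuity_pt_comp with (f1 := fun y => t - y) (f2 := lognormal mu sigma).
      apply continuity_pt_minus; [apply continuity_pt_const; intros ? ?; auto|apply continuity_pt_id].
      apply logn_cont; auto. }
  pose proof (@RInt_opp R_CompleteNormedModule (fun s => lognormal mu sigma (t - s)) 0 t EX) as X.
  change (opp ?a) with (- a) in X.
  rewrite (RInt_ext _ (fun y => - lognormal mu sigma (t - y))) in E.
  2:{ intros. change (scal ?a ?b) with (a * b). 
      assert (E3 : -1 * x + t = t - x) by lra. rewrite E3. lra. }
  lra.
Qed.

Lemma conv_bound mu sigma (f : R -> R) t m : 0 < sigma -> 0 <= t ->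
  (forall s, continuity_pt f s) ->
  (forall s, 0 <= s <= t -> Rabs (f s) <= m) ->
  Rabs (RInt (fun s => lognormal mu sigma (t - s) * f s) 0 t) <= m * RInt (lognormal mu sigma) 0 t.
Proof.
  intros Hs Ht Hc Hb.
  assert (Cg : forall z, continuity_pt (fun s => lognormal mu sigma (t - s)) z).
  { intros z. apply continuity_pt_comp with (f1 := fun y => t - y) (f2 := lognormal mu sigma).
    apply continuity_pt_minus; [apply continuity_pt_const; intros ? ?; auto|apply continuity_pt_id].
    apply logn_cont; auto. }
  assert (Ex1 : ex_RInt (fun s => lognormal mu sigma (t - s) * f s) 0 t).
  { apply (@ex_RInt_continuous R_CompleteNormedModule). intros z _.
    apply continuity_pt_filterlim. apply continuity_pt_mult; auto. }
  assert (Ex2 : ex_RInt (fun s => m * lognormal mu sigma (t - s)) 0 t).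
  { apply (@ex_RInt_continuous R_CompleteNormedModule). intros z _.
    apply continuity_pt_filterlim. apply continuity_pt_mult; auto.
    apply continuity_pt_const; intros ? ?; auto. }
  assert (Ex3 : ex_RInt (fun s => - (m * lognormal mu sigma (t - s))) 0 t).
  { apply (@ex_RInt_continuous R_CompleteNormedModule). intros z _.
    apply continuity_pt_filterlim. apply continuity_pt_opp. apply continuity_pt_mult; auto.
    apply continuity_pt_const; intros ? ?; auto. }
  assert (E2 : RInt (fun s => m * lognormal mu sigma (t - s)) 0 t = m * RInt (lognormal mu sigma) 0 t).
  { rewrite <- conv_G by auto.
    apply (@RInt_scal R_CompleteNormedModule (fun s => lognormal mu sigma (t - s))).
    apply (@ex_RInt_continuous R_CompleteNormedModule). intros z _.
    apply continuity_pt_filterlim. auto. }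
  assert (E3 : RInt (fun s => - (m * lognormal mu sigma (t - s))) 0 t = - (m * RInt (lognormal mu sigma) 0 t)).
  { rewrite <- E2. apply (@RInt_opp R_CompleteNormedModule (fun s => m * lognormal mu sigma (t - s))). auto. }
  apply Rabs_le. split.
  - rewrite <- E3. apply RInt_le; auto.
    intros x Hx. pose proof (logn_ge0 mu sigma (t - x) Hs).
    assert (A := Hb x ltac:(lra)). apply Rabs_le_between in A. nra.
  - rewrite <- E2. apply RInt_le; auto.
    intros x Hx. pose proof (logn_ge0 mu sigma (t - x) Hs).
    assert (A := Hb x ltac:(lra)). apply Rabs_le_between in A. nra.
Qed.


Lemma right_cont0 (I : R -> R) (d0 : R) :
  filterlim (fun h => (I h - I 0) / h) (at_right 0) (locally d0) ->
  forall eps, 0 < eps -> exists d, 0 < d /\ forall h, 0 < h < d -> Rabs (I h - I 0) < eps.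
Proof.
  intros H eps Heps.
  assert (L : locally d0 (fun v => Rabs (v - d0) < 1)) by (apply locally_R with 1; auto; lra).
  pose proof (H _ L) as H'. unfold filtermap, at_right, within in H'.
  destruct H' as [d Hd]. simpl in Hd.
  set (k := Rabs d0 + 1).
  assert (Hk : 0 < k) by (unfold k; pose proof (Rabs_pos d0); lra).
  exists (Rmin d (eps / k)). split.
  { apply Rmin_pos. apply cond_pos. apply Rdiv_lt_0_compat; auto. }
  intros h Hh.
  assert (Hh1 : h < d) by (eapply Rlt_le_trans; [apply Hh|apply Rmin_l]).
  assert (Hh2 : h < eps / k) by (eapply Rlt_le_trans; [apply Hh|apply Rmin_r]).
  assert (B : Rabs ((I h - I 0) / h - d0) < 1).
  { apply (Hd h). apply ballR. rewrite Rminus_0_r. rewrite Rabs_right by lra. auto. lra. }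
  assert (B2 : Rabs ((I h - I 0) / h) < k).
  { unfold k. pose proof (Rabs_triang_inv ((I h - I 0) / h) d0). lra. }
  replace (I h - I 0) with (h * ((I h - I 0) / h)) by (field; lra).
  rewrite Rabs_mult, (Rabs_right h) by lra.
  apply Rle_lt_trans with (h * k). apply Rmult_le_compat_l; lra.
  apply Rmult_lt_reg_r with (/ k). apply Rinv_0_lt_compat; auto.
  rewrite Rmult_assoc, Rinv_r by lra. unfold Rdiv in Hh2. lra.
Qed.

Lemma cmult (f g : R -> R) x : continuity_pt f x -> continuity_pt g x ->
  continuity_pt (fun u => f u * g u) x.
Proof. intros A B. exact (continuity_pt_mult f g x A B). Qed.

Lemma cexp_lin k x : continuity_pt (fun u => exp (k * u)) x.
Proof. apply continuity_pt_filterlim. apply (@ex_derive_continuous R_AbsRing R_NormedModule (fun u => exp (k * u))). auto_derive. auto. Qed.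

Lemma bound_on (f : R -> R) (a b : R) : a <= b -> (forall x, continuity_pt f x) ->
  exists B, 0 <= B /\ forall s, a <= s <= b -> Rabs (f s) <= B.
Proof.
  intros Hab Hc.
  destruct (continuity_ab_maj (fun s => Rabs (f s)) a b Hab) as [x [Hx _]].
  { intros; apply continuity_pt_filterlim. apply continuous_comp.
    apply continuity_pt_filterlim; auto. apply continuous_Rabs. }
  exists (Rabs (f x)). split. apply Rabs_pos. auto.
Qed.

Lemma mvt_nondec (f df : R -> R) (a b : R) : a <= b ->
  (forall x, continuity_pt f x) -> (forall x, a < x < b -> is_derive f x (df x)) ->
  (forall x, a < x < b -> 0 <= df x) -> f a <= f b.
Proof.
  intros Hab Hc Hd Hp.
  destruct (MVT_gen f a b (fun x => Rmax (df x) 0)) as [c [_ Hc']].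
  - intros x Hx. rewrite Rmin_left, Rmax_right in Hx by lra. rewrite Rmax_left by (apply Rge_le, Rle_ge, Hp; lra). auto.
  - intros; auto.
  - pose proof (Rmax_r (df c) 0). nra.
Qed.

Lemma gronwall (y dy : R -> R) (a b c C : R) : a <= c <= b -> 0 <= C ->
  (forall x, continuity_pt y x) -> (forall x, a < x < b -> is_derive y x (dy x)) ->
  (forall x, a < x < b -> Rabs (dy x) <= C * Rabs (y x)) -> y c = 0 ->
  forall x, a <= x <= b -> y x = 0.
Proof.
  intros Hc HC Hcont Hd Hb Hyc x Hx.
  assert (Key : forall u, a < u < b -> y u * dy u <= C * (y u * y u) /\ - (C * (y u * y u)) <= y u * dy u).
  { intros u Hu. specialize (Hb u Hu).
    assert (Rabs (y u * dy u) <= C * (y u * y u)).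
    { rewrite Rabs_mult. replace (y u * y u) with (Rabs (y u) * Rabs (y u)).
      replace (C * (Rabs (y u) * Rabs (y u))) with (Rabs (y u) * (C * Rabs (y u))) by ring.
      apply Rmult_le_compat_l; auto. apply Rabs_pos.
      rewrite <- Rabs_mult. apply Rabs_right. apply Rle_ge, Rle_0_sqr. }
    apply Rabs_le_between in H. lra. }
  assert (Hcz : forall k, forall u, continuity_pt (fun u => y u * y u * exp (k * u)) u).
  { intros k u. apply cmult. apply cmult; auto. apply cexp_lin. }
  assert (Hdz : forall k u, a < u < b -> is_derive (fun u => y u * y u * exp (k * u)) u
                   ((2 * (y u * dy u) + k * (y u * y u)) * exp (k * u))).
  { intros k u Hu. pose proof (Hd u Hu) as D.
    auto_derive. split. exists (dy u). auto. split. exists (dy u); auto. auto.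
    replace (Derive (fun x0 => y x0) u) with (dy u) by (symmetry; apply is_derive_unique; exact D). ring. }
  assert (Hsq : y x * y x = 0 -> y x = 0) by (intros; nra).
  apply Hsq.
  destruct (Rle_dec c x) as [Hcx|Hcx].
  - set (k := -2 * C).
    assert (Z : y x * y x * exp (k * x) <= y c * y c * exp (k * c)).
    { pose proof (mvt_nondec (fun u => - (y u * y u * exp (k * u)))
        (fun u => - ((2 * (y u * dy u) + k * (y u * y u)) * exp (k * u))) c x Hcx) as M.
      assert (- (y c * y c * exp (k * c)) <= - (y x * y x * exp (k * x))); [|lra].
      apply M.
      + intros; apply continuity_pt_opp. apply Hcz.
      + intros u Hu. apply (@is_derive_opp R_AbsRing R_NormedModule). apply Hdz. lra.
      + intros u Hu. destruct (Key u ltac:(lra)). pose proof (exp_pos (k * u)).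
        replace (- ((2 * (y u * dy u) + k * (y u * y u)) * exp (k * u))) with
          ((2 * (C * (y u * y u) - y u * dy u)) * exp (k * u)) by (unfold k; ring).
        apply Rmult_le_pos; lra. }
    rewrite Hyc in Z.
    assert (A0 : 0 <= y x * y x * exp (k * x)) by (apply Rmult_le_pos; [apply Rle_0_sqr|apply Rlt_le, exp_pos]).
    assert (A1 : 0 * 0 * exp (k * c) = 0) by ring.
    assert (H1 : y x * y x * exp (k * x) = 0) by lra.
    apply Rmult_integral in H1. destruct H1 as [H1|H1]; auto. pose proof (exp_pos (k*x)); lra.
  - set (k := 2 * C).
    assert (Z : y x * y x * exp (k * x) <= y c * y c * exp (k * c)).
    { apply (mvt_nondec (fun u => (y u * y u * exp (k * u)))
        (fun u => ((2 * (y u * dy u) + k * (y u * y u)) * exp (k * u))) x c). lra.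
      + intros; apply Hcz.
      + intros u Hu. apply Hdz. lra.
      + intros u Hu. destruct (Key u ltac:(lra)). pose proof (exp_pos (k * u)).
        replace ((2 * (y u * dy u) + k * (y u * y u)) * exp (k * u)) with
          ((2 * (y u * dy u + C * (y u * y u))) * exp (k * u)) by (unfold k; ring).
        apply Rmult_le_pos; lra. }
    rewrite Hyc in Z.
    assert (A0 : 0 <= y x * y x * exp (k * x)) by (apply Rmult_le_pos; [apply Rle_0_sqr|apply Rlt_le, exp_pos]).
    assert (A1 : 0 * 0 * exp (k * c) = 0) by ring.
    assert (H1 : y x * y x * exp (k * x) = 0) by lra.
    apply Rmult_integral in H1. destruct H1 as [H1|H1]; auto. pose proof (exp_pos (k*x)); lra.
Qed.


Lemma rpos_I' (I' : R -> R) (t : R) : 0 <= t ->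
  (forall t, 0 < t -> continuous I' t) -> filterlim I' (at_right 0) (locally (I' 0)) ->
  0 < I' t -> exists d, 0 < d /\ forall s, t <= s <= t + d -> 0 < I' s.
Proof.
  intros Ht Hc Hc0 Hp.
  destruct Ht as [Ht|Ht].
  - pose proof (proj2 (continuity_pt_filterlim I' t) (Hc t Ht)) as C.
    pose proof (proj1 (continuity_pt_locally I' t) C) as C'. destruct (C' (mkposreal _ Hp)) as [d Hd].
    exists (d / 2). split. pose proof (cond_pos d); lra.
    intros s Hs. assert (A : Rabs (s - t) < d).
    { pose proof (cond_pos d). rewrite Rabs_right by lra. lra. }
    specialize (Hd s A). simpl in Hd. apply Rabs_lt_between in Hd. lra.
  - subst t.
    assert (L : locally (I' 0) (fun v => Rabs (v - I' 0) < I' 0)) by (apply locally_R with (I' 0); auto).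
    pose proof (Hc0 _ L) as H'. unfold filtermap, at_right, within in H'.
    destruct H' as [d Hd]. simpl in Hd.
    exists (d / 2). split. pose proof (cond_pos d); lra.
    intros s Hs. destruct (Req_dec s 0) as [E|E]. subst; auto.
    assert (A : Rabs (s - 0) < d).
    { pose proof (cond_pos d). rewrite Rabs_right by lra. lra. }
    specialize (Hd s A ltac:(lra)). apply Rabs_lt_between in Hd. lra.
Qed.

Theorem corollary3p7 (M beta mu sigma I0 : R) (I : R -> R) :
  0 < M -> 0 < beta -> 0 < sigma -> 0 <= I0 <= M ->
  is_solution beta M I0 (lognormal mu sigma) I ->
  exists Iinf : R, is_lim I p_infty Iinf.
Proof.
  intros HM Hb Hs HI0 Hsol.
  destruct Hsol as [I' [[Hd [Hr0 [Hc Hc0]]] [HI0e Heq]]].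
  set (g := lognormal mu sigma) in *.
  set (It := fun s => I (Rmax s 0)).
  assert (ItE : forall s, 0 <= s -> It s = I s).
  { intros s Hs0. unfold It. rewrite Rmax_left by lra. auto. }
  assert (Itc : forall s, continuity_pt It s).
  { intros s. destruct (Rlt_le_dec 0 s) as [P|P].
    - apply continuity_pt_filterlim.
      apply continuous_ext_loc with I.
      + apply filter_imp with (fun y => 0 < y). intros y Hy. symmetry. apply ItE. lra.
        apply locally_gt; auto.
      + apply (@ex_derive_continuous R_AbsRing R_NormedModule). eexists. apply Hd; auto.
    - destruct P as [P|P].
      + apply continuity_pt_filterlim.
        apply continuous_ext_loc with (fun _ => I 0).
        * apply filter_imp with (fun y => y < 0). intros y Hy. unfold It. rewrite Rmax_right by lra. auto.
          apply locally_lt; auto.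
        * apply continuous_const.
      + subst s. apply continuity_pt_locally. intros eps.
        destruct (right_cont0 I (I' 0) Hr0 eps (cond_pos eps)) as [d [Hd0 Hd1]].
        apply locally_R with d; auto. intros y Hy.
        rewrite (ItE 0) by lra.
        destruct (Rle_dec y 0) as [Y|Y].
        * unfold It. rewrite Rmax_right by lra. rewrite Rminus_diag, Rabs_R0. apply cond_pos.
        * rewrite ItE by lra. apply Hd1. rewrite Rminus_0_r in Hy. rewrite Rabs_right in Hy by lra. lra. }
  assert (Itd : forall s, 0 < s -> is_derive It s (I' s)).
  { intros s Hs0. apply is_derive_ext_loc with I. 
    apply filter_imp with (fun y => 0 < y). intros y Hy. symmetry. apply ItE. lra.
    apply locally_gt; auto. apply Hd; auto. }
  set (K := fun t => RInt (fun s => g (t - s) * I s) 0 t).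
  assert (Kb : forall t m, 0 <= t -> (forall s, 0 <= s <= t -> Rabs (I s) <= m) ->
             Rabs (K t) <= m * RInt g 0 t).
  { intros t m Ht Hm. unfold K.
    rewrite (RInt_ext _ (fun s => g (t - s) * It s)).
    2:{ intros x Hx. rewrite Rmin_left, Rmax_right in Hx by lra. rewrite ItE by lra. reflexivity. }
    apply conv_bound; auto. intros s Hs0. rewrite ItE by lra. auto. }
  assert (GL : forall t, 0 <= t -> 0 <= RInt g 0 t < 1).
  { intros; split. apply GL_ge0; auto. apply GL_lt1; auto. }
  assert (Bnd : forall T, 0 <= T -> exists B, 0 <= B /\ forall s, 0 <= s <= T -> Rabs (I s) <= B).
  { intros T HT. destruct (bound_on It 0 T HT Itc) as [B [HB1 HB2]]. exists B. split; auto.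
    intros s Hs0. rewrite <- ItE by lra. auto. }
  assert (Jb : forall T, 0 <= T -> exists C, 0 <= C /\ forall s, 0 <= s <= T -> Rabs (I s - K s) <= C).
  { intros T HT. destruct (Bnd T HT) as [B [HB1 HB2]]. exists (2 * B). split. lra.
    intros s Hs0. pose proof (Kb s B ltac:(lra) ltac:(intros; apply HB2; lra)) as Kbs.
    destruct (GL s ltac:(lra)) as [G1 G2].
    assert (Rabs (K s) <= B) by nra.
    pose proof (Rabs_triang (I s) (- K s)). rewrite Rabs_Ropp in H0.
    pose proof (HB2 s Hs0). unfold Rminus. lra. }
  set (y := fun s => M - It s).
  assert (yc : forall s, continuity_pt y s).
  { intros s. apply continuity_pt_minus. apply continuity_pt_const. intros ? ?; auto. apply Itc. }
  assert (Gr : forall T c, 0 <= c <= T -> y c = 0 -> forall s, 0 <= s <= T -> y s = 0).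
  { intros T c Hc' Hyc s Hs'.
    destruct (Jb T ltac:(lra)) as [C [HC1 HC2]].
    apply (gronwall y (fun s => - I' s) 0 T c (beta * C)); auto.
    - apply Rmult_le_pos; lra.
    - intros x Hx. unfold y.
      pose proof (@is_derive_minus R_AbsRing R_NormedModule (fun _ => M) It x _ _ (is_derive_const M x) (Itd x ltac:(lra))) as D.
      assert (E : - I' x = minus 0 (I' x)) by (unfold minus, plus, opp; simpl; ring).
      rewrite E. exact D.
    - intros x Hx. rewrite Heq by lra. unfold y. rewrite ItE by lra.
      rewrite Rabs_Ropp, !Rabs_mult, (Rabs_right beta) by lra.
      pose proof (HC2 x ltac:(lra)). pose proof (Rabs_pos (M - I x)).
      assert (Rabs (M - I x) * Rabs (I x - K x) <= Rabs (M - I x) * C) by (apply Rmult_le_compat_l; auto).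
      assert (beta * (Rabs (M - I x) * Rabs (I x - K x)) <= beta * (Rabs (M - I x) * C)) by (apply Rmult_le_compat_l; lra).
      change (RInt (fun s0 => g (x - s0) * I s0) 0 x) with (K x). lra. }
  assert (HeqK : forall t, 0 <= t -> I' t = beta * (M - I t) * (I t - K t)).
  { intros t Ht. rewrite Heq by auto. reflexivity. }
  assert (K0 : K 0 = 0) by (unfold K; rewrite RInt_point; reflexivity).
  assert (LG : forall a, 0 <= a -> (forall s, 0 <= s <= a -> I s = 0) ->
             exists d, 0 < d /\ forall s, 0 <= s <= a + d -> I s = 0).
  { intros a Ha Hz.
    destruct (Bnd (a + 1) ltac:(lra)) as [B [HB1 HB2]].
    set (L := beta * (M + B) * 2).
    assert (HL : 0 <= L) by (unfold L; nra).
    set (d := / (2 * (L + 1))).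
    assert (Hd0 : 0 < d) by (unfold d; apply Rinv_0_lt_compat; lra).
    assert (HdL : L * d <= / 2).
    { unfold d. apply Rmult_le_reg_r with (2 * (L + 1)). lra.
      rewrite Rmult_assoc, Rinv_l by lra. lra. }
    assert (Hd1 : d <= 1).
    { unfold d. apply Rmult_le_reg_r with (2 * (L + 1)). lra.
      rewrite Rinv_l by lra. lra. }
    destruct (continuity_ab_maj (fun s => Rabs (It s)) a (a + d) ltac:(lra)) as [s0 [Hs0 Hs0r]].
    { intros; apply continuity_pt_filterlim. apply continuous_comp.
      apply continuity_pt_filterlim; auto. apply continuous_Rabs. }
    set (m := Rabs (It s0)).
    assert (Hm0 : 0 <= m) by apply Rabs_pos.
    assert (Hbd : forall s, 0 <= s <= a + d -> Rabs (I s) <= m).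
    { intros s Hs1. destruct (Rle_dec s a) as [A|A].
      - rewrite Hz by lra. rewrite Rabs_R0. auto.
      - rewrite <- ItE by lra. apply Hs0. lra. }
    assert (HI' : forall u, a <= u <= a + d -> Rabs (I' u) <= L * m).
    { intros u Hu. rewrite HeqK by lra.
      rewrite !Rabs_mult, (Rabs_right beta) by lra.
      assert (A1 : Rabs (M - I u) <= M + B).
      { pose proof (HB2 u ltac:(lra)). pose proof (Rabs_triang M (- I u)). rewrite Rabs_Ropp in H0.
        rewrite (Rabs_right M) in H0 by lra. unfold Rminus. lra. }
      assert (A2 : Rabs (I u - K u) <= 2 * m).
      { pose proof (Kb u m ltac:(lra) ltac:(intros; apply Hbd; lra)) as Kbs.
        destruct (GL u ltac:(lra)) as [G1 G2].
        assert (Rabs (K u) <= m) by nra.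
        pose proof (Rabs_triang (I u) (- K u)). rewrite Rabs_Ropp in H0.
        pose proof (Hbd u ltac:(lra)). unfold Rminus. lra. }
      unfold L. pose proof (Rabs_pos (M - I u)). pose proof (Rabs_pos (I u - K u)).
      assert (Rabs (M - I u) * Rabs (I u - K u) <= (M + B) * (2 * m)) by (apply Rmult_le_compat; auto).
      assert (beta * (Rabs (M - I u) * Rabs (I u - K u)) <= beta * ((M + B) * (2 * m))) by (apply Rmult_le_compat_l; lra).
      lra. }
    assert (Hmz : m = 0).
    { destruct (MVT_gen It a s0 I') as [c [Hc1 Hc2]].
      - intros x Hx. rewrite Rmin_left, Rmax_right in Hx by lra. apply Itd. lra.
      - intros; apply Itc.
      - rewrite Rmin_left, Rmax_right in Hc1 by lra.
        rewrite (ItE a) in Hc2 by lra. rewrite Hz in Hc2 by lra.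
        assert (m = Rabs (I' c * (s0 - a))) by (unfold m; rewrite <- Hc2; f_equal; ring).
        rewrite Rabs_mult in H. rewrite (Rabs_right (s0 - a)) in H by lra.
        pose proof (HI' c ltac:(lra)). pose proof (Rabs_pos (I' c)).
        assert (Rabs (I' c) * (s0 - a) <= L * m * d) by (apply Rmult_le_compat; lra).
        assert (L * m * d <= m / 2).
        { replace (L * m * d) with (m * (L * d)) by ring. 
          apply Rle_trans with (m * / 2). apply Rmult_le_compat_l; lra. lra. }
        lra. }
    exists d. split; auto. intros s Hs1. pose proof (Hbd s Hs1). rewrite Hmz in H.
    pose proof (Rabs_pos (I s)). assert (Rabs (I s) = 0) by lra.
    destruct (Req_dec (I s) 0); auto. apply Rabs_no_R0 in H2. contradiction. }
  destruct (Req_dec I0 M) as [EM|EM].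
  -
    assert (HM' : forall t, 0 <= t -> I t = M).
    { intros t Ht. pose proof (Gr t 0 ltac:(lra)) as G.
      assert (y 0 = 0) by (unfold y; rewrite ItE by lra; lra).
      specialize (G H t ltac:(lra)). unfold y in G. rewrite ItE in G by lra. lra. }
    exists M. apply is_lim_spec. intros eps. simpl. exists 0. intros x Hx.
    rewrite HM' by lra. rewrite Rminus_diag, Rabs_R0. apply cond_pos.
  - assert (Hlt : forall t, 0 <= t -> I t < M).
    { intros t Ht. destruct (Rlt_le_dec (I t) M) as [A|A]; auto. exfalso.
      assert (Y0 : 0 < y 0) by (unfold y; rewrite ItE by lra; lra).
      assert (Yt : y t <= 0) by (unfold y; rewrite ItE by lra; lra).
      destruct (IVT_gen y 0 t 0 yc) as [c [Hc1 Hc2]].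
      { split. apply Rle_trans with (y t). apply Rmin_r. lra. apply Rle_trans with (y 0). lra. apply Rmax_l. }
      rewrite Rmin_left, Rmax_right in Hc1 by lra.
      pose proof (Gr t c Hc1 Hc2 0 ltac:(lra)). lra. }
    assert (HI'pos : forall t, 0 <= t -> 0 <= I' t).
    { apply NNPP. intros Hneg.
      apply not_all_ex_not in Hneg. destruct Hneg as [t1 Ht1].
      apply imply_to_and in Ht1. destruct Ht1 as [Ht1 Ht1'].
      apply Rnot_le_lt in Ht1'.
      set (S := fun t => 0 <= t /\ forall s, 0 <= s <= t -> 0 <= I' s).
      assert (S0 : S 0).
      { split. lra. intros s Hs1. replace s with 0 by lra. rewrite HeqK by lra. rewrite K0. rewrite HI0e.
        apply Rmult_le_pos; [|lra]. apply Rmult_le_pos; lra. }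
      assert (Sb : bound S).
      { exists t1. intros t [Ht Hst]. destruct (Rle_dec t t1) as [A|A]; auto.
        exfalso. specialize (Hst t1 ltac:(lra)). lra. }
      destruct (completeness S Sb (ex_intro _ 0 S0)) as [ts [Hub Hlub]].
      assert (Hts0 : 0 <= ts) by (apply Hub; auto).
      assert (Hbelow : forall s, 0 <= s < ts -> 0 <= I' s).
      { intros s Hs1. destruct (Rle_lt_dec 0 (I' s)) as [A|A]; auto. exfalso.
        assert (is_upper_bound S s).
        { intros t [Ht Hst]. destruct (Rle_dec t s) as [B|B]; auto.
          specialize (Hst s ltac:(lra)). lra. }
        specialize (Hlub s H). lra. }
      assert (Mono : forall a b, 0 <= a <= b -> b <= ts -> I a <= I b).
      { intros a b Hab Hbt. rewrite <- (ItE a), <- (ItE b) by lra.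
        apply (mvt_nondec It I' a b); try lra; auto.
        intros x Hx. apply Itd. lra.
        intros x Hx. apply Hbelow. lra. }
      assert (Ige : forall s, 0 <= s <= ts -> I0 <= I s).
      { intros s Hs1. rewrite <- HI0e. apply Mono; lra. }
      destruct (Rle_lt_dec (I ts) 0) as [Z|P].
      +
        assert (Hz : forall s, 0 <= s <= ts -> I s = 0).
        { intros s Hs1. pose proof (Ige s Hs1). pose proof (Mono s ts ltac:(lra) ltac:(lra)). lra. }
        destruct (LG ts Hts0 Hz) as [d [Hd0 Hd1]].
        assert (S (ts + d)).
        { split. lra. intros s Hs1. rewrite HeqK by lra. rewrite Hd1 by lra.
          assert (Kz : K s = 0).
          { pose proof (Kb s 0 ltac:(lra) ltac:(intros; rewrite Hd1 by lra; rewrite Rabs_R0; lra)).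
            rewrite Rmult_0_l in H. pose proof (Rabs_pos (K s)).
            destruct (Req_dec (K s) 0); auto. apply Rabs_no_R0 in H1. lra. }
          rewrite Kz. lra. }
        specialize (Hub _ H). lra.
      +
        assert (KI : K ts <= I ts * RInt g 0 ts).
        { pose proof (Kb ts (I ts) Hts0) as Kbs.
          assert (Rabs (K ts) <= I ts * RInt g 0 ts).
          { apply Kbs. intros s Hs1. pose proof (Ige s Hs1). pose proof (Mono s ts ltac:(lra) ltac:(lra)).
            rewrite Rabs_right by lra. lra. }
          pose proof (Rle_abs (K ts)). lra. }
        destruct (GL ts Hts0) as [G1 G2].
        assert (J : 0 < I ts - K ts).
        { assert (I ts * RInt g 0 ts < I ts * 1) by (apply Rmult_lt_compat_l; lra). lra. }
        assert (Pos : 0 < I' ts).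
        { rewrite HeqK by lra. pose proof (Hlt ts Hts0).
          apply Rmult_lt_0_compat; auto. apply Rmult_lt_0_compat; lra. }
        destruct (rpos_I' I' ts Hts0 Hc Hc0 Pos) as [d [Hd0 Hd1]].
        assert (S (ts + d)).
        { split. lra. intros s Hs1. destruct (Rlt_le_dec s ts) as [A|A].
          apply Hbelow; lra. left; apply Hd1; lra. }
        specialize (Hub _ H). lra. }
    (* monotone bounded => limit *)
    set (E := fun x => exists t, 0 <= t /\ x = I t).
    assert (Eb : bound E).
    { exists M. intros x [t [Ht ->]]. left. apply Hlt; auto. }
    destruct (completeness E Eb (ex_intro _ (I 0) (ex_intro _ 0 (conj (Rle_refl 0) eq_refl)))) as [Lm [Hub Hlub]].
    assert (MonoAll : forall a b, 0 <= a <= b -> I a <= I b).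
    { intros a b Hab. rewrite <- (ItE a), <- (ItE b) by lra.
      apply (mvt_nondec It I' a b); try lra; auto.
      intros x Hx. apply Itd. lra.
      intros x Hx. apply HI'pos. lra. }
    exists Lm. apply is_lim_spec. intros eps. simpl.
    assert (Ex : exists t0, 0 <= t0 /\ Lm - eps < I t0).
    { apply NNPP. intros Hn.
      assert (is_upper_bound E (Lm - eps)).
      { intros x [t [Ht ->]]. destruct (Rle_lt_dec (I t) (Lm - eps)) as [A|A]; auto.
        exfalso. apply Hn. exists t. auto. }
      specialize (Hlub _ H). pose proof (cond_pos eps). lra. }
    destruct Ex as [t0 [Ht0 Ht0']].
    exists t0. intros x Hx.
    assert (I x <= Lm) by (apply Hub; exists x; split; [lra|auto]).
    pose proof (MonoAll t0 x ltac:(lra)).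
    apply Rabs_lt_between. pose proof (cond_pos eps). lra.
Qed.
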